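(* Let $I$ be a proper ideal in $\mathbb{B}_n$ generated by $g_1,\dots,g_r\in\mathbb{B}_n$ with canonical representatives $G_1,\dots,G_r\in P=\mathbb{F}_2[X_1,\dots,X_n]$. Let $Z=(z_1,\dots,z_s)$ be a tuple of distinct Boolean indeterminates and $Z'=(Z_1,\dots,Z_s)$ the tuple of their canonical representatives. (a) The procedure $\mathrm{CHECK}$ (over $K=\mathbb{F}_2$) applied to $(G_1,\dots,G_r)$ and $Z'$ returns a weight tuple $W\in\mathbb{N}^n$ if and only if there exist $f_1,\dots,f_s\in\langle g_1,\dots,g_r\rangle_{\mathbb{F}_2}$ such that $(f_1,\dots,f_s)$ is a $Z$-separating tuple of Boolean polynomials in $I$. (b) In the situation of (a), for every term ordering $\sigma$ compatible with the grading given by $W$ there exist $f'_1,\dots,f'_s\in\langle g_1,\dots,g_r\rangle_{\mathbb{F}_2}$ with $\operatorname{LT}_\sigma(f'_i)=z_i$ for $i=1,\dots,s$.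
   Context: $\mathbb{I}_n=\langle X_1^2-X_1,\dots,X_n^2-X_n\rangle$, $\mathbb{B}_n=P/\mathbb{I}_n$, Boolean indeterminates $x_i=X_i+\mathbb{I}_n$. Every $f\in\mathbb{B}_n$ has a unique representative $F\in P$ that is a sum of square-free terms (canonical representative); for a term ordering $\sigma$ on $P$, $\operatorname{LT}_\sigma(f)=\operatorname{LT}_\sigma(F)+\mathbb{I}_n$. A tuple $(f_1,\dots,f_s)$ of Boolean polynomials in $I$ is $Z$-separating if there is a term ordering $\sigma$ with $\operatorname{LT}_\sigma(f_i)=z_i$ for all $i$. For $W\in\mathbb{N}^n$ the $W$-degree of $X_1^{a_1}\cdots X_n^{a_n}$ is $\sum w_ia_i$; a term ordering $\sigma$ is compatible with the grading given by $W$ if $t>_\sigma t'$ whenever the $W$-degree of $t$ exceeds that of $t'$. Below, $K$ is a field, $P=K[x_1,\dots,x_n]$ generically; here $K=\mathbb{F}_2$ and the indeterminates are $X_1,\dots,X_n$. $\operatorname{Supp}(f)$ is the set of terms of $f$; $\operatorname{Lin}(f)$ the homogeneous degree-1 component; $\langle\cdot\rangle_K$ the $K$-linear span. Procedure $\mathrm{LI}$ (linear interreduction), applied to a tuple $Z=(z_1,\dots,z_s)$ of distinct indeterminates and polynomials $g_1,\dots,g_r$: let $t_1>\dots>t_m$ (lexicographic order, $x_1>\dots>x_n$) be the terms of $\bigcup_j\operatorname{Supp}(g_j)$ other than $z_1,\dots,z_s$; form the coefficient matrix $M$ of $g_1,\dots,g_r$ w.r.t. column order $(z_1,\dots,z_s,t_1,\dots,t_m)$;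 output the polynomials whose coefficient vectors are the nonzero rows of the reduced row echelon form of $M$, in order. Procedure $\mathrm{CHECK}$ on input $(g_1,\dots,g_r)$ and $Z$: (1) set $w_1=\dots=w_n=0$, $\delta=\max_j\deg(g_j)$, $d=1$. (2) In each $g_j$ delete every monomial not divisible by some indeterminate of $Z$. (3) If $\dim_K\langle\operatorname{Lin}(g_1),\dots,\operatorname{Lin}(g_r)\rangle_K<\#Z$, return ``Fail''. (4) Repeat: (i) replace the current list $g_1,\dots,g_r$ by the output of $\mathrm{LI}$ applied to the current $Z$ and the current list; (ii) let $\widetilde Z$ be the set of indeterminates of the current $Z$ that occur as elements of the current list; (iii) if $\widetilde Z=\emptyset$, return ``Fail''; (iv) for each $z\in\widetilde Z$, say $z=x_k$, set $w_k=d$ and remove $z$ from $Z$; (v) in each current $g_j$ delete every monomial not divisible by some indeterminate of the (updated) $Z$; (vi) replace $d$ by $\delta d+1$; until $Z$ is empty. (5) Return $W=(w_1,\dots,w_n)$. *)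

(* Defs.v *)
From HB Require Import structures.
From mathcomp Require Import all_boot all_order all_algebra.
Set Implicit Arguments. Unset Strict Implicit. Unset Printing Implicit Defensive.
Import Order.TTheory GRing.Theory.
Local Open Scope ring_scope.

(* Boolean polynomials.  An element f of B_n = F_2[X_1..X_n]/I_n is encoded  *)
(* by the coefficient vector of its canonical representative F in P, i.e.   *)
(* by the function sending each square-free term X^S (S a subset of the     *)
(* indeterminates, indices 0..n-1 standing for X_1..X_n) to its coefficient. *)
(* So the same object also IS the canonical representative F.                *)
Definition term n := {set 'I_n}.
Definition bpoly n := {ffun term n -> 'F_2}.

Section Boolean.
Variable n : nat.
Implicit Types (f g : bpoly n) (t u : term n).

Definition support f : {set term n} := [set t | f t != 0].

Definition bone : bpoly n := [ffun t => (t == set0)%:R].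
Definition bvar (k : 'I_n) : bpoly n := [ffun t => (t == [set k])%:R].

Definition bscale (a : 'F_2) f : bpoly n := [ffun t => a * f t].

(* multiplication in B_n : X^S * X^T = X^(S u T) since x_i^2 = x_i *)
Definition bmul f g : bpoly n :=
  \sum_(s : term n) \sum_(t : term n) [ffun u => (u == s :|: t)%:R * f s * g t].

Definition in_ideal r (g : 'I_r -> bpoly n) f : Prop :=
  exists h : 'I_r -> bpoly n, f = \sum_(j < r) bmul (h j) (g j).

Definition in_span r (g : 'I_r -> bpoly n) f : Prop :=
  exists c : 'I_r -> 'F_2, f = \sum_(j < r) bscale (c j) (g j).

Definition mon := {ffun 'I_n -> nat}.
Definition mon1 : mon := [ffun => 0%N].
Definition monM (a b : mon) : mon := [ffun i => (a i + b i)%N].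
Definition mon_of t : mon := [ffun i => nat_of_bool (i \in t)].

Definition term_ordering (lt : rel mon) : Prop :=
  [/\ irreflexive lt, transitive lt,
      (forall a b, a != b -> lt a b || lt b a),
      (forall a b c, lt a b -> lt (monM a c) (monM b c)) &
      (forall a, a != mon1 -> lt mon1 a)].

(* LT_sigma(f) = t  (t a square-free term; LT_sigma(f) = LT_sigma(F) + I_n) *)
Definition is_LT (lt : rel mon) f t : Prop :=
  f t != 0 /\ forall u, f u != 0 -> u != t -> lt (mon_of u) (mon_of t).

Definition wdeg (W : {ffun 'I_n -> nat}) (a : mon) : nat := (\sum_(i < n) W i * a i)%N.
Definition compatible_with (W : {ffun 'I_n -> nat}) (lt : rel mon) : Prop :=
  forall a b, (wdeg W b < wdeg W a)%N -> lt b a.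

Definition Z_separating r (g : 'I_r -> bpoly n) s (Z : 'I_s -> 'I_n)
    (f : 'I_s -> bpoly n) : Prop :=
  (forall i, in_ideal g (f i)) /\
  exists lt, term_ordering lt /\ forall i, is_LT lt (f i) [set Z i].

Definition lex_gt t u : bool :=
  [exists i : 'I_n, [&& i \in t, i \notin u &
     [forall j : 'I_n, (j < i)%N ==> ((j \in t) == (j \in u))]]].

Definition pivot (cols : seq (term n)) f : option (term n) :=
  ohead [seq c <- cols | f c != 0].

(* nonzero rows of the reduced row echelon form of the coefficient matrix of
   [rows] with respect to the column order [cols] (Gauss-Jordan elimination;
   all terms of the rows are assumed to occur in [cols]) *)
Fixpoint rref (cols : seq (term n)) (rows : seq (bpoly n)) : seq (bpoly n) :=
  if cols is c :: cs then
    let i := find (fun q : bpoly n => q c != 0) rows in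
    if (i < size rows)%N then
      let r0 := nth 0 rows i in
      let r := bscale (r0 c)^-1 r0 in
      let others := [seq q - bscale (q c) r | q : bpoly n <- take i rows ++ drop i.+1 rows] in
      let rest := rref cs others in
      foldl (fun (acc q : bpoly n) => if pivot cs q is Some p then acc - bscale (acc p) q else acc)
            r rest :: rest
    else rref cs rows
  else [::].

Definition LI (Z : seq 'I_n) (gs : seq (bpoly n)) : seq (bpoly n) :=
  let zt := [seq [set k] | k <- Z] in
  let others := [seq t <- enum (\bigcup_(g <- gs) support g) | t \notin zt] in
  let cols := zt ++ sort (fun t u => ~~ lex_gt u t) others in
  rref cols gs.

Definition restrictZ (Z : seq 'I_n) f : bpoly n :=
  [ffun t : term n => if has (fun k => k \in t) Z then f t else 0].

Definition linmx (gs : seq (bpoly n)) : 'M['F_2]_(size gs, n) :=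
  \matrix_(j < size gs, i < n) (nth 0 gs j) [set i].

Definition poly_deg f : nat := \max_(t in support f) #|t|.

(* step (4); [fuel] bounds the number of iterations (size Z suffices, since
   each non-failing iteration removes at least one element from Z) *)
Fixpoint check_loop (fuel : nat) (Z : seq 'I_n) (gs : seq (bpoly n))
    (w : {ffun 'I_n -> nat}) (delta d : nat) : option {ffun 'I_n -> nat} :=
  if fuel is fuel'.+1 then
    let gs1 := LI Z gs in
    let Zt := [seq k <- Z | bvar k \in gs1] in
    if Zt == [::] then None else
    let w' := [ffun i => if i \in Zt then d else w i] in
    let Z' := [seq k <- Z | k \notin Zt] in
    let gs2 := [seq restrictZ Z' g | g <- gs1] in
    let d' := (delta * d + 1)%N in
    if Z' == [::] then Some w' else check_loop fuel' Z' gs2 w' delta d'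
  else None.

Definition CHECK (gs : seq (bpoly n)) (Z : seq 'I_n) : option {ffun 'I_n -> nat} :=
  let delta := (\max_(g <- gs) poly_deg g)%N in
  let gs2 := [seq restrictZ Z g | g <- gs] in
  if (\rank (linmx gs2) < size Z)%N then None
  else check_loop (size Z) Z gs2 [ffun => 0%N] delta 1%N.

End Boolean.

(* Main.v *)
Require Import Defs.
From HB Require Import structures.
From mathcomp Require Import all_boot all_order all_algebra zify.
Set Implicit Arguments. Unset Strict Implicit. Unset Printing Implicit Defensive.
Import GRing.Theory.
Local Open Scope ring_scope.

Lemma F2_cases (a : 'F_2) : a = 0 \/ a = 1.
Proof. case: a => [[|[|]]] //= ?; [left|right]; exact/val_inj. Qed.
Lemma F2_neq0 (a : 'F_2) : a != 0 -> a = 1.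
Proof. by case: (F2_cases a) => ->. Qed.
Lemma F2_opp (a : 'F_2) : - a = a.
Proof. by case: (F2_cases a) => ->; rewrite ?oppr0 //; apply/val_inj. Qed.

Section Main.
Variable n : nat.
Local Notation V := (bpoly n).

Lemma bscaleE (a : 'F_2) (f : V) : bscale a f = if a == 0 then 0 else f.
Proof.
apply/ffunP=> t; rewrite ffunE; case: (F2_cases a) => ->; rewrite ?eqxx.
  by rewrite mul0r ffunE.
by rewrite oner_eq0 mul1r.
Qed.

Lemma bscaleD (a b : 'F_2) (f : V) : bscale (a + b) f = bscale a f + bscale b f.
Proof. by apply/ffunP=> t; rewrite !ffunE mulrDl. Qed.

Lemma bscale_ev (a : 'F_2) (f : V) t : bscale a f t = a * f t.
Proof. by rewrite ffunE. Qed.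

Lemma oppV (f : V) : - f = f.
Proof. by apply/ffunP=> t; rewrite ffunE F2_opp. Qed.

Lemma subV (f g : V) : f - g = f + g.
Proof. by rewrite oppV. Qed.

Inductive inspan (t : seq V) : V -> Prop :=
| isp0 : inspan t 0
| ispE x : x \in t -> inspan t x
| ispD x y : inspan t x -> inspan t y -> inspan t (x + y).

Lemma inspanB t x y : inspan t x -> inspan t y -> inspan t (x - y).
Proof. by rewrite subV; apply: ispD. Qed.

Lemma inspanZ t a x : inspan t x -> inspan t (bscale a x).
Proof. by rewrite bscaleE; case: ifP => // _; constructor. Qed.

Lemma inspan_trans t u x : inspan t x -> (forall y, y \in t -> inspan u y) -> inspan u x.
Proof. by move=> H Hu; elim: H => [|y /Hu|y z _ Hy _ Hz] //; [constructor|constructor]. Qed.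

Lemma inspan_sub t u x : inspan t x -> {subset t <= u} -> inspan u x.
Proof. move=> H Hs; apply: (inspan_trans H) => y /Hs; exact: ispE. Qed.

Lemma inspan_zero t x u : inspan t x -> (forall q, q \in t -> q u = 0) -> x u = 0.
Proof. move=> H Hq; elim: H => [|y /Hq|y z _ Hy _ Hz] //; by rewrite ffunE ?Hy ?Hz ?addr0. Qed.

Lemma inspan_sum t x : inspan t x ->
  exists c : 'I_(size t) -> 'F_2, x = \sum_i bscale (c i) (nth 0 t i).
Proof.
elim=> [|y yt|y z _ [c ->] _ [d ->]].
- by exists (fun _ => 0); rewrite big1 // => i _; rewrite bscaleE eqxx.
- have Hi : (index y t < size t)%N by rewrite index_mem.
  exists (fun i => (i == Ordinal Hi)%:R).
  rewrite (bigD1 (Ordinal Hi)) //= eqxx big1 ?addr0.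
    by rewrite bscaleE oner_eq0 nth_index.
  by move=> i /negbTE ->; rewrite bscaleE eqxx.
- by exists (fun i => c i + d i); rewrite -big_split /=; apply: eq_bigr => i _; rewrite bscaleD.
Qed.

Definition RR (cs : seq (term n)) (out : seq V) :=
  forall i, (i < size out)%N -> exists p, pivot cs (nth 0 out i) = Some p /\
    nth 0 out i p = 1 /\ forall j, (j < size out)%N -> j != i -> nth 0 out j p = 0.

Lemma pivot_cons0 c cs (q : V) : q c = 0 -> pivot (c :: cs) q = pivot cs q.
Proof. by move=> H; rewrite /pivot /= H eqxx. Qed.
Lemma pivot_consN c cs (q : V) : q c != 0 -> pivot (c :: cs) q = Some c.
Proof. by move=> H; rewrite /pivot /= H. Qed.

Lemma RR_unit cs out (f : V) u : RR cs out -> inspan out f ->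
  (forall t, f t = (t == u)%:R) -> f \in out.
Proof.
move=> HR /inspan_sum [c Hf] Hu.
have Hev : forall v, f v = \sum_i c i * nth 0 out i v.
  by move=> v; rewrite Hf sum_ffunE; apply: eq_bigr => i _; rewrite ffunE.
have Hpiv : forall i : 'I_(size out), c i != 0 -> exists p, [/\ p = u,
     nth 0 out i p = 1 & forall j, (j < size out)%N -> j != i -> nth 0 out j p = 0].
  move=> i ci; have [p [_ [H1 H2]]] := HR i (ltn_ord i).
  exists p; split=> //.
  have : f p = c i.
    rewrite Hev (bigD1 i) //= H1 mulr1 big1 ?addr0 // => j ji.
    by rewrite H2 ?mulr0.
  rewrite Hu => Hfp; apply/eqP; apply: contraTT ci => /negbTE pu.
  by rewrite -Hfp pu.
case: (pickP (fun i => c i != 0)) => [i ci|H0]; last first.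
  have := Hu u; rewrite eqxx Hev big1 => [|i _]; first by move/eqP; rewrite eq_sym oner_eq0.
  by have /negbFE/eqP -> := H0 i; rewrite mul0r.
have [p [Hpu Hp1 Hp2]] := Hpiv i ci.
have Hoth : forall j : 'I_(size out), j != i -> c j = 0.
  move=> j ji; apply/eqP; apply: contraTT isT => cj.
  have [p' [Hpu' Hp1' Hp2']] := Hpiv j cj.
  have := Hp2' i (ltn_ord i); rewrite eq_sym ji => /(_ isT).
  by rewrite Hpu' -Hpu Hp1 => /eqP; rewrite oner_eq0.
have -> : f = nth 0 out i.
  rewrite Hf (bigD1 i) //= big1 ?addr0 => [|j ji]; last by rewrite Hoth // bscaleE eqxx.
  by rewrite (F2_neq0 ci) bscaleE oner_eq0.
exact: mem_nth.
Qed.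


Lemma RR_behead cs (q : V) qs : RR cs (q :: qs) -> RR cs qs.
Proof.
move=> H i Hi; have [p [H1 [H2 H3]]] := H i.+1 Hi.
exists p; split=> //; split=> // j Hj ji; exact: (H3 j.+1 Hj ji).
Qed.

Lemma nth_in (qs : seq V) q : q \in qs -> exists2 j, (j < size qs)%N & q = nth 0 qs j.
Proof. by move=> H; exists (index q qs); rewrite ?index_mem ?nth_index. Qed.

Lemma foldl_spec cs qs (acc : V) : RR cs qs ->
  let res := foldl (fun (acc q : V) => if pivot cs q is Some p then acc - bscale (acc p) q else acc) acc qs in
  [/\ inspan qs (res - acc),
    (forall j p, (j < size qs)%N -> pivot cs (nth 0 qs j) = Some p -> res p = 0) &
    (forall u, (forall q, q \in qs -> q u = 0) -> res u = acc u)].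
Proof.
elim: qs acc => [|q qs IH] acc HR /=.
  by split => //; rewrite subrr; constructor.
have [p [Hp [Hq1 Hq0]]] := HR 0%N isT.
rewrite /= in Hp Hq1; rewrite Hp.
have Hqs0 : forall q', q' \in qs -> q' p = 0.
  move=> q' /nth_in [j Hj ->]; exact: (Hq0 j.+1).
have [IH1 IH2 IH3] := IH (acc - bscale (acc p) q) (RR_behead HR).
move: IH1 IH2 IH3; set res := foldl _ _ _ => IH1 IH2 IH3.
split.
- have -> : res - acc = (res - (acc - bscale (acc p) q)) - bscale (acc p) q.
    by rewrite opprB addrA addrAC addrK.
  apply: inspanB; first by apply: (inspan_sub IH1) => y yq; rewrite inE yq orbT.
  by apply: inspanZ; apply: ispE; rewrite inE eqxx.
- move=> [|j] p' /= Hj Hp'.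
    move: Hp'; rewrite Hp => -[<-].
    by rewrite IH3 // !ffunE Hq1 mulr1 subrr.
  exact: (IH2 j p').
- move=> u Hu; rewrite IH3 => [|q' q'i]; last by apply: Hu; rewrite inE q'i orbT.
  by rewrite !ffunE (Hu q) ?inE ?eqxx // mulr0 subr0.
Qed.

Lemma rref_spec cs (rs : seq V) : (forall q t, q \in rs -> t \notin cs -> q t = 0) ->
  [/\ forall q, q \in rref cs rs -> inspan rs q,
      forall q, q \in rs -> inspan (rref cs rs) q & RR cs (rref cs rs)].
Proof.
elim: cs rs => [|c cs IH] rs Hrs /=.
  split=> // q qrs.
  have -> : q = 0 by apply/ffunP=> t; rewrite ffunE Hrs.
  exact: isp0.
case: ifP => Hi; last first.
  have Hc : forall q, q \in rs -> q c = 0.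
    move=> q qrs; apply/eqP; apply: contraFT Hi => qc; rewrite -has_find; apply/hasP; exists q => //.
  have [S1 S2 RRo] : [/\ forall q, q \in rref cs rs -> inspan rs q,
      forall q, q \in rs -> inspan (rref cs rs) q & RR cs (rref cs rs)].
    apply: IH => q t qrs tcs; case: (eqVneq t c) => [->|tc]; first exact: Hc.
    by apply: Hrs; rewrite // inE negb_or tc.
  have Ho : forall q, q \in rref cs rs -> q c = 0.
    by move=> q /S1 /inspan_zero; apply.
  split=> // k Hk; have [p [H1 [H2 H3]]] := RRo k Hk.
  by exists p; rewrite pivot_cons0 ?Ho ?mem_nth.
set i := find _ rs.
set r0 := nth 0 rs i.
have Hr0c : r0 c != 0 by move: Hi; rewrite -has_find => /(nth_find 0).
have Hr0 : r0 \in rs by rewrite mem_nth.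
have Hr : bscale (r0 c)^-1 r0 = r0 by rewrite (F2_neq0 Hr0c) invr1 bscaleE oner_eq0.
rewrite Hr.
set others := map _ _.
have Hoc : forall q, q \in others -> q c = 0.
  move=> q /mapP [q0 _ ->]; by rewrite !ffunE (F2_neq0 Hr0c) mulr1 subrr.
have Hoout : forall q t, q \in others -> t \notin cs -> q t = 0.
  move=> q t qo tcs; case: (eqVneq t c) => [->|tc]; first exact: Hoc.
  have tn : t \notin c :: cs by rewrite inE negb_or tc.
  move: qo => /mapP [q0 q0i ->].
  have q0rs : q0 \in rs by move: q0i; rewrite mem_cat => /orP [/mem_take|/mem_drop].
  by rewrite !ffunE (Hrs q0) // (Hrs r0) // mulr0 subr0.
have [S1 S2 RRrest] := IH others Hoout.
set rest := rref cs others.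
have Hrestc : forall q, q \in rest -> q c = 0.
  by move=> q /S1 /inspan_zero; apply.
have Hospan : forall y, y \in others -> inspan rs y.
  move=> y /mapP [q0 q0i ->].
  have q0rs : q0 \in rs by move: q0i; rewrite mem_cat => /orP [/mem_take|/mem_drop].
  by apply: inspanB; [apply: ispE | apply: inspanZ; apply: ispE].
have Hrspan : forall y, y \in rest -> inspan rs y.
  by move=> y /S1 Hy; apply: (inspan_trans Hy).
have [F1 F2 F3] := foldl_spec r0 RRrest.
move: F1 F2 F3; set r' := foldl _ _ _ => F1 F2 F3.
have Hr'c : r' c = 1 by rewrite F3 // (F2_neq0 Hr0c).
have Hsub : {subset rest <= r' :: rest} by move=> y yr; rewrite inE yr orbT.
split.
- move=> q; rewrite inE => /orP [/eqP ->|/Hrspan //].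
  rewrite -(subrK r0 r'); apply: ispD; last exact: ispE.
  exact: (inspan_trans F1).
- have Hr0s : inspan (r' :: rest) r0.
    rewrite -(subKr r' r0); apply: inspanB; first by apply: ispE; rewrite inE eqxx.
    exact: (inspan_sub F1).
  move=> q qrs.
  have : q \in take i rs ++ r0 :: drop i.+1 rs.
    by rewrite /r0 -drop_nth // cat_take_drop.
  rewrite mem_cat inE orbCA => /orP [/eqP -> //|qi].
  rewrite -(subrK (bscale (q c) r0) q); apply: ispD; last exact: inspanZ.
  apply: (inspan_sub _ Hsub); apply: S2; apply/mapP; exists q => //; by rewrite mem_cat.
- move=> [|k] Hk.
    exists c; rewrite /= pivot_consN ?Hr'c ?oner_eq0 //; split=> //; split=> // [[|j]] //= Hj _.
    by apply: Hrestc; rewrite mem_nth.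
  have [p [H1 [H2 H3]]] := RRrest k Hk.
  exists p; rewrite /= pivot_cons0 ?Hrestc ?mem_nth //; split=> //; split=> // [[|j]] Hj jk /=.
    exact: (F2 k).
  exact: H3.
Qed.


Lemma LI_spec (Zs : seq 'I_n) (gs : seq V) :
  [/\ forall q, q \in LI Zs gs -> inspan gs q,
      forall q, q \in gs -> inspan (LI Zs gs) q & exists cs, RR cs (LI Zs gs)].
Proof.
rewrite /LI; set cols := _ ++ _.
suff Hc : forall q t, q \in gs -> t \notin cols -> q t = 0.
  by have [S1 S2 S3] := rref_spec Hc; split => //; exists cols.
move=> q t qg; apply: contraNeq => qt.
have Ht : t \in \bigcup_(g <- gs) Defs.support g.
  by rewrite bigcup_seq; apply/bigcupP; exists q => //; rewrite /Defs.support inE.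
rewrite mem_cat; case: (boolP (t \in _)) => //= tz.
by rewrite mem_sort mem_filter tz mem_enum.
Qed.

Lemma restrictZD Zs (f g : V) : restrictZ Zs (f + g) = restrictZ Zs f + restrictZ Zs g.
Proof. by apply/ffunP=> t; rewrite !ffunE; case: ifP; rewrite ?addr0. Qed.
Lemma restrictZ0 Zs : restrictZ Zs (0 : V) = 0.
Proof. by apply/ffunP=> t; rewrite !ffunE; case: ifP. Qed.

Lemma inspan_map Zs t x : inspan t x -> inspan (map (restrictZ Zs) t) (restrictZ Zs x).
Proof.
elim=> [|y yt|y z _ Hy _ Hz]; first by rewrite restrictZ0; constructor.
  by apply: ispE; apply: map_f.
by rewrite restrictZD; constructor.
Qed.

Lemma inspan_map_inv Zs t y : inspan (map (restrictZ Zs) t) y ->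
  exists2 x, inspan t x & y = restrictZ Zs x.
Proof.
elim=> [|y' /mapP [x xt ->]|y1 y2 _ [x1 H1 ->] _ [x2 H2 ->]].
- by exists 0; [constructor | rewrite restrictZ0].
- by exists x => //; constructor.
- by exists (x1 + x2); [constructor | rewrite restrictZD].
Qed.

Lemma restrictZK (Z1 Z2 : seq 'I_n) (f : V) : {subset Z1 <= Z2} ->
  restrictZ Z1 (restrictZ Z2 f) = restrictZ Z1 f.
Proof.
move=> H; apply/ffunP=> t; rewrite !ffunE; case: ifP => // /hasP [k kz kt].
by rewrite (_ : has _ Z2 = true) //; apply/hasP; exists k => //; apply: H.
Qed.

Definition good (G : seq V) (Zc : seq 'I_n) (gs : seq V) :=
  (forall q, q \in gs -> exists2 f, inspan G f & q = restrictZ Zc f) /\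
  (forall f, inspan G f -> inspan gs (restrictZ Zc f)).

Lemma good_span G Zc gs q : good G Zc gs -> inspan gs q ->
  exists2 f, inspan G f & q = restrictZ Zc f.
Proof.
move=> [I1 I2]; elim=> [|y /I1 //|y1 y2 _ [x1 H1 ->] _ [x2 H2 ->]].
  by exists 0; [constructor | rewrite restrictZ0].
by exists (x1 + x2); [constructor | rewrite restrictZD].
Qed.

Lemma good_LI G Zc gs : good G Zc gs -> good G Zc (LI Zc gs).
Proof.
move=> Hg; have [S1 S2 _] := LI_spec Zc gs; split.
  by move=> q /S1; apply: good_span.
by move=> f /Hg.2 H; apply: (inspan_trans H).
Qed.

Lemma good_restr G Zc Z' gs : good G Zc gs -> {subset Z' <= Zc} ->
  good G Z' (map (restrictZ Z') gs).
Proof.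
move=> [I1 I2] HZ; split.
  move=> q /mapP [q1 /I1 [f Hf ->] ->]; exists f => //; exact: restrictZK.
by move=> f /I2 /(inspan_map Z'); rewrite restrictZK.
Qed.


Lemma wdeg_mon (W : {ffun 'I_n -> nat}) (t : term n) : wdeg W (mon_of t) = (\sum_(i in t) W i)%N.
Proof.
rewrite /wdeg [RHS]big_mkcond /=; apply: eq_bigr => i _; rewrite ffunE.
by case: (i \in t); rewrite ?muln1 ?muln0.
Qed.

Lemma sum_bound (t : term n) (w : {ffun 'I_n -> nat}) delta d :
  (forall i, i \in t -> (delta * w i < d)%N) -> (#|t| <= delta)%N -> (0 < d)%N ->
  (\sum_(i in t) w i < d)%N.
Proof.
move=> Hw Ht Hd; case: (posnP delta) => [d0|dpos].
  have /cards0_eq -> : #|t| = 0%N by move: Ht; rewrite d0 leqn0 => /eqP.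
  by rewrite big_set0.
suff : (delta * (\sum_(i in t) w i) <= delta * d.-1)%N.
  by rewrite leq_pmul2l // => H; lia.
rewrite big_distrr /=; apply: (@leq_trans (\sum_(i in t) d.-1)).
  by apply: leq_sum => i it; have := Hw i it; lia.
by rewrite sum_nat_const leq_mul2r Ht orbT.
Qed.

Lemma loop_sound (G : seq V) delta :
  (forall f t, inspan G f -> f t != 0 -> (#|t| <= delta)%N) ->
  forall fuel Zc gs (w : {ffun 'I_n -> nat}) d (W : {ffun 'I_n -> nat}), good G Zc gs -> (0 < d)%N ->
  (forall i, i \notin Zc -> (delta * w i < d)%N) ->
  check_loop fuel Zc gs w delta d = Some W ->
  (forall i, i \notin Zc -> W i = w i) /\
  (forall k, k \in Zc -> exists f, [/\ inspan G f, f [set k] != 0 &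
      forall t, f t != 0 -> t != [set k] -> (wdeg W (mon_of t) < W k)%N]).
Proof.
move=> Hdeg; elim=> [|fuel IH] Zc gs w d W Hg Hd Hw //=.
set gs1 := LI Zc gs; set Zt := [seq k <- Zc | _].
case: eqP => // HZt.
set w' := finfun _; set Z' := [seq k <- Zc | _].
move=> Hc.
have Hg1 : good G Zc gs1 := good_LI Hg.
have HsubZ' : {subset Z' <= Zc} by move=> k; rewrite mem_filter => /andP[].
have [HW1 HW2] : (forall i, i \notin Z' -> W i = w' i) /\
  (forall k, k \in Z' -> exists f, [/\ inspan G f, f [set k] != 0 &
      forall t, f t != 0 -> t != [set k] -> (wdeg W (mon_of t) < W k)%N]).
  move: Hc; case: eqP => HZ' Hc.
    by case: Hc => <-; split => // k; rewrite HZ'.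
  apply: (IH _ _ _ _ _ _ _ _ Hc); first exact: good_restr Hg1 HsubZ'.
    lia.
  move=> i iZ'; rewrite /w' ffunE; case: ifP => iZt; first lia.
  have iZc : i \notin Zc by apply: contra iZ' => iZc; rewrite mem_filter iZt iZc.
  move: (Hw i iZc) => H; case: (posnP delta) => [d0|dp]; first by rewrite d0 in H *; lia.
  have := leq_pmull d dp; lia.
have HL1 : forall i, i \notin Zc -> W i = w i.
  move=> i iZc.
  have iZt : i \notin Zt by rewrite mem_filter (negbTE iZc) andbF.
  have iZ' : i \notin Z' by rewrite mem_filter (negbTE iZc) andbF.
  by rewrite HW1 // /w' ffunE (negbTE iZt).
split => // k kZc.
case: (boolP (k \in Zt)) => kZt; last by apply: HW2; rewrite mem_filter kZt kZc.
have kZ' : k \notin Z' by rewrite mem_filter kZt.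
have HWk : W k = d by rewrite HW1 // /w' ffunE kZt.
have : bvar k \in gs1 by move: kZt; rewrite mem_filter => /andP[].
move=> /(Hg1.1) [f Hf Hfk].
exists f; split => //.
  have := congr1 (fun h : V => h [set k]) Hfk; rewrite /= !ffunE eqxx.
  rewrite (_ : has _ Zc = true); last by apply/hasP; exists k; rewrite ?set11.
  by move=> <-; rewrite oner_eq0.
move=> t ft tk.
have Hnot : forall i, i \in t -> i \notin Zc.
  move=> i it; apply/negP => iZc.
  have := congr1 (fun h : V => h t) Hfk; rewrite /= !ffunE (negbTE tk).
  rewrite (_ : has _ Zc = true); last by apply/hasP; exists i.
  by move=> H; move: ft; rewrite -H eqxx.
rewrite wdeg_mon HWk (eq_bigr (fun i => w i)) => [|i it]; last by rewrite HL1 ?Hnot.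
apply: (@sum_bound t w delta d) => //; first by move=> i it; apply: Hw; apply: Hnot.
exact: Hdeg Hf ft.
Qed.


Lemma monM1l (a : mon n) : monM (mon1 n) a = a.
Proof. by apply/ffunP=> i; rewrite !ffunE. Qed.

Lemma mon_split (t : term n) k : k \in t ->
  mon_of t = monM (mon_of (t :\ k)) (mon_of [set k]).
Proof.
move=> kt; apply/ffunP=> i; rewrite !ffunE !inE.
by case: (eqVneq i k) => [->|ik] /=; rewrite ?kt ?addn0 ?add0n.
Qed.

Lemma mon_of_le lt (t : term n) k : term_ordering lt -> k \in t ->
  mon_of t = mon_of [set k] \/ lt (mon_of [set k]) (mon_of t).
Proof.
move=> [_ _ _ Hmul Hpos] kt; rewrite (mon_split kt).
case: (eqVneq (mon_of (t :\ k)) (mon1 n)) => [->|N]; first by left; rewrite monM1l.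
by right; have := Hmul _ _ (mon_of [set k]) (Hpos _ N); rewrite monM1l.
Qed.

Lemma restrict_min lt (f : V) (Zc : seq 'I_n) k : term_ordering lt ->
  is_LT lt f [set k] -> k \in Zc ->
  (forall k', k' \in Zc -> ~~ lt (mon_of [set k']) (mon_of [set k])) ->
  restrictZ Zc f = bvar k.
Proof.
move=> Hto [Hfk Hlt] kZc Hmin; have [Hirr Htr _ _ _] := Hto.
apply/ffunP=> t; rewrite !ffunE; case: ifP => [/hasP [k' k'Z k't]|Hn].
  case: (eqVneq t [set k]) => [->|tk]; first by rewrite (F2_neq0 Hfk).
  rewrite /=; apply/eqP; apply: contraT => ft.
  have := Hlt t ft tk; case: (mon_of_le Hto k't) => [->|H1 H2].
    by move=> H; have := Hmin k' k'Z; rewrite H.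
  by have := Hmin k' k'Z; rewrite (Htr _ _ _ H1 H2).
case: (eqVneq t [set k]) => [tk|] //.
by move: Hn; rewrite tk (_ : has _ Zc = true) //; apply/hasP; exists k; rewrite ?set11.
Qed.

Lemma ex_minimal (T : eqType) (R : rel T) (s : seq T) : irreflexive R -> transitive R ->
  s != [::] -> exists2 x, x \in s & forall y, y \in s -> ~~ R y x.
Proof.
move=> Hirr Htr; elim: s => [//|a s IH] _.
case: (eqVneq s [::]) => [->|sn].
  by exists a; rewrite ?inE ?eqxx // => y; rewrite inE => /eqP ->; rewrite Hirr.
have [m ms Hm] := IH sn.
case: (boolP (R a m)) => Ham.
  exists a; first by rewrite inE eqxx.
  move=> y; rewrite inE => /orP [/eqP ->|ys]; first by rewrite Hirr.
  by apply/negP => Rya; have := Hm y ys; rewrite (Htr _ _ _ Rya Ham).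
exists m; first by rewrite inE ms orbT.
by move=> y; rewrite inE => /orP [/eqP ->|ys] //; apply: Hm.
Qed.

Lemma loop_complete (G : seq V) delta lt (Zall : seq 'I_n) : term_ordering lt ->
  (forall k, k \in Zall -> exists2 f, inspan G f & is_LT lt f [set k]) ->
  forall fuel Zc gs (w : {ffun 'I_n -> nat}) d, good G Zc gs -> {subset Zc <= Zall} ->
  Zc != [::] -> (size Zc <= fuel)%N ->
  exists W, check_loop fuel Zc gs w delta d = Some W.
Proof.
move=> Hto HZ; have [Hirr Htr _ _ _] := Hto.
elim=> [|fuel IH] Zc gs w d Hg HsZ Hne Hsz; first by move: Hsz; rewrite leqn0 size_eq0 (negbTE Hne).
rewrite /=; set gs1 := LI Zc gs; set Zt := [seq k <- Zc | _].
have [k kZc Hk] := @ex_minimal _ (fun a b => lt (mon_of [set a]) (mon_of [set b])) _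
  (fun a => Hirr _) (fun a b c => Htr _ _ _) Hne.
have [f Hf Hfk] := HZ k (HsZ k kZc).
have Hr : restrictZ Zc f = bvar k := restrict_min Hto Hfk kZc Hk.
have kgs1 : bvar k \in gs1.
  have [_ _ [cs Hcs]] := LI_spec Zc gs.
  apply: (RR_unit (u := [set k]) Hcs); last by move=> t; rewrite ffunE.
  by rewrite -Hr; apply: (good_LI Hg).2.
have kZt : k \in Zt by rewrite mem_filter kZc kgs1.
case: eqP => [HZt|_]; first by rewrite HZt in kZt.
case: eqP => [_|HZ']; first by eexists.
apply: IH.
- by apply: good_restr (good_LI Hg) _ => x; rewrite mem_filter => /andP[].
- by move=> x; rewrite mem_filter => /andP[_ /HsZ].
- exact/eqP.
- have Hlt : (size [seq x <- Zc | x \notin Zt] < size Zc)%N.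
    rewrite size_filter -(count_predC (fun x => x \notin Zt) Zc).
    rewrite -{1}(addn0 (count _ _)) ltn_add2l -has_count.
    by apply/hasP; exists k => //; rewrite /= negbK.
  by rewrite -ltnS; apply: leq_trans Hlt Hsz.
Qed.


Definition lexlt (a b : mon n) := [exists i : 'I_n, (a i < b i)%N &&
  [forall j : 'I_n, (j < i)%N ==> (a j == b j)]].
Definition wlt (W : {ffun 'I_n -> nat}) (a b : mon n) :=
  (wdeg W a < wdeg W b)%N || ((wdeg W a == wdeg W b) && lexlt a b).

Lemma lex_irr a : lexlt a a = false.
Proof. by apply/negbTE/existsPn => i; rewrite ltnn. Qed.

Lemma lex_trans a b c : lexlt a b -> lexlt b c -> lexlt a c.
Proof.
move=> /existsP [i /andP [Hi /forallP Hj]] /existsP [k /andP [Hk /forallP Hl]].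
apply/existsP; case: (ltngtP i k) => [ik|ki|/val_inj ik].
- exists i; rewrite -(eqP (implyP (Hl i) ik)) Hi /=; apply/forallP => j; apply/implyP => ji.
  by rewrite (eqP (implyP (Hj j) ji)) (eqP (implyP (Hl j) (ltn_trans ji ik))).
- exists k; rewrite (eqP (implyP (Hj k) ki)) Hk /=; apply/forallP => j; apply/implyP => jk.
  by rewrite (eqP (implyP (Hj j) (ltn_trans jk ki))) (eqP (implyP (Hl j) jk)).
- subst k; exists i; rewrite (ltn_trans Hi Hk) /=; apply/forallP => j; apply/implyP => ji.
  by rewrite (eqP (implyP (Hj j) ji)) (eqP (implyP (Hl j) ji)).
Qed.

Lemma lex_total a b : a != b -> lexlt a b || lexlt b a.
Proof.
move=> ab.
have [i0 Hi0] : exists i, a i != b i.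
  by apply/existsP; apply: contraNT ab => /existsPn H; apply/eqP/ffunP => i; apply/eqP; rewrite -[_ == _]negbK H.
case: (@arg_minnP _ i0 (fun i => a i != b i) (fun i : 'I_n => val i) Hi0) => i Hi Hmin.
have Hlt : forall j : 'I_n, (j < i)%N -> a j == b j.
  move=> j ji; apply: contraTT ji => Hj; rewrite -leqNgt; exact: Hmin.
case: (ltngtP (a i) (b i)) => H.
- by apply/orP; left; apply/existsP; exists i; rewrite H /=; apply/forallP => j; apply/implyP/Hlt.
- apply/orP; right; apply/existsP; exists i; rewrite H /=; apply/forallP => j; apply/implyP => /Hlt.
  by rewrite eq_sym.
- by rewrite H eqxx in Hi.
Qed.

Lemma lex_mul a b c : lexlt a b -> lexlt (monM a c) (monM b c).
Proof.
move=> /existsP [i /andP [Hi /forallP Hj]]; apply/existsP; exists i.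
rewrite !ffunE ltn_add2r Hi /=; apply/forallP => j; apply/implyP => ji.
by rewrite !ffunE eqn_add2r (implyP (Hj j) ji).
Qed.

Lemma lex_pos a : a != mon1 n -> lexlt (mon1 n) a.
Proof.
move=> H; have := lex_total H; rewrite eq_sym in H *.
case/orP => // /existsP [i /andP [Hi _]].
by move: Hi; rewrite ffunE.
Qed.

Lemma wdeg_monM (W : {ffun 'I_n -> nat}) (a b : mon n) : wdeg W (monM a b) = (wdeg W a + wdeg W b)%N.
Proof. by rewrite /wdeg -big_split /=; apply: eq_bigr => i _; rewrite ffunE mulnDr. Qed.

Lemma wlt_ordering (W : {ffun 'I_n -> nat}) : term_ordering (wlt W) /\ compatible_with W (wlt W).
Proof.
split; last by move=> a b H; rewrite /wlt H.
split.
- by move=> a; rewrite /wlt ltnn lex_irr andbF.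
- move=> y x z; rewrite /wlt.
  move=> /orP [H1|/andP [/eqP E1 L1]] /orP [H2|/andP [/eqP E2 L2]]; apply/orP.
  + by left; apply: ltn_trans H1 H2.
  + by left; rewrite -E2.
  + by left; rewrite E1.
  + by right; rewrite E1 E2 eqxx (lex_trans L1 L2).
- move=> a b ab; rewrite /wlt; case: (ltngtP (wdeg W a) (wdeg W b)) => //= _.
  exact: lex_total.
- move=> a b c; rewrite /wlt !wdeg_monM ltn_add2r eqn_add2r.
  by move=> /orP [->//|/andP [-> /lex_mul ->]]; rewrite orbT.
- move=> a H; rewrite /wlt.
  have -> : wdeg W (mon1 n) = 0%N by rewrite /wdeg big1 // => i _; rewrite ffunE muln0.
  case: (posnP (wdeg W a)) => [->|H0]; first by rewrite eqxx lex_pos.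
  by [].
Qed.


Lemma in_span_inspan r (g : 'I_r -> V) f : in_span g f -> inspan [seq g j | j <- enum 'I_r] f.
Proof.
move=> [c ->]; apply: (big_ind (inspan _)) => [|x y|j _]; [exact: isp0|exact: ispD|].
by apply: inspanZ; apply: ispE; apply: map_f; rewrite mem_enum.
Qed.

Lemma inspan_in_span r (g : 'I_r -> V) f : inspan [seq g j | j <- enum 'I_r] f -> in_span g f.
Proof.
elim=> [|x /mapP [j _ ->]|x y _ [c ->] _ [d ->]].
- by exists (fun _ => 0); rewrite big1 // => j _; rewrite bscaleE eqxx.
- exists (fun i => (i == j)%:R); rewrite (bigD1 j) //= big1 ?addr0 => [|i /negbTE ->].
    by rewrite eqxx bscaleE oner_eq0.
  by rewrite bscaleE eqxx.
- by exists (fun j => c j + d j); rewrite -big_split; apply: eq_bigr => j _; rewrite bscaleD.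
Qed.

Lemma bmul_scale_one a (x : V) : bmul (bscale a (bone n)) x = bscale a x.
Proof.
apply/ffunP=> u; rewrite /bmul (@sum_ffunE (term n) 'F_2).
rewrite (eq_bigr (fun s : term n => if s == set0 then a * x u else 0)) => [|s _].
  by rewrite -big_mkcond big_pred1_eq ffunE.
rewrite (@sum_ffunE (term n) 'F_2); case: eqP => [->|/eqP s0].
  rewrite (bigD1 u) //= big1 => [|t tu]; last first.
    by rewrite !ffunE set0U eq_sym (negbTE tu) mul0r mul0r.
  by rewrite !ffunE set0U !eqxx mulr1 mul1r addr0.
by rewrite big1 // => t _; rewrite !ffunE (negbTE s0) mulr0 mulr0 mul0r.
Qed.

Lemma in_span_ideal r (g : 'I_r -> V) f : in_span g f -> in_ideal g f.
Proof.
move=> [c ->]; exists (fun j => bscale (c j) (bone n)).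
by apply: eq_bigr => j _; rewrite bmul_scale_one.
Qed.

Lemma deg_bound (G : seq V) f t : inspan G f -> f t != 0 ->
  (#|t| <= \max_(g <- G) poly_deg g)%N.
Proof.
elim=> [|x xG|x y _ Hx _ Hy].
- by rewrite ffunE eqxx.
- move=> xt; apply: leq_trans (leq_bigmax_seq _ xG isT).
  by rewrite /poly_deg; apply: leq_bigmax_cond; rewrite /Defs.support inE.
- rewrite ffunE => H; case: (eqVneq (x t) 0) => [x0|]; last exact: Hx.
  by apply: Hy; rewrite x0 add0r in H.
Qed.

Definition linrow (h : V) : 'rV['F_2]_n := \row_k h [set k].

Lemma linrow_sub gs h : inspan gs h -> (linrow h <= linmx gs)%MS.
Proof.
elim=> [|x xg|x y _ Hx _ Hy].
- have -> : linrow 0 = 0 by apply/rowP => k; rewrite !mxE ffunE.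
  exact: sub0mx.
- have Hj : (index x gs < size gs)%N by rewrite index_mem.
  have -> : linrow x = row (Ordinal Hj) (linmx gs) by apply/rowP => k; rewrite !mxE /= nth_index.
  exact: row_sub.
- have -> : linrow (x + y) = linrow x + linrow y by apply/rowP => k; rewrite !mxE ffunE.
  exact: addmx_sub.
Qed.

Lemma rank_bound (G : seq V) s (Z : 'I_s -> 'I_n) (Zs : seq 'I_n) lt (f : 'I_s -> V) :
  injective Z -> term_ordering lt -> (forall i, Z i \in Zs) ->
  (forall i, inspan G (f i)) -> (forall i, is_LT lt (f i) [set Z i]) ->
  (s <= \rank (linmx [seq restrictZ Zs g | g <- G]))%N.
Proof.
move=> Zinj Hto HZs Hf HLT; have [Hirr Htr _ _ _] := Hto.
pose F := \matrix_(i < s, k < n) restrictZ Zs (f i) [set k].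
have HF : (F <= linmx [seq restrictZ Zs g | g <- G])%MS.
  apply/row_subP => i.
  have -> : row i F = linrow (restrictZ Zs (f i)) by apply/rowP => k; rewrite !mxE.
  by apply: linrow_sub; apply: inspan_map.
suff Hfree : row_free F by rewrite -(eqP Hfree); exact: mxrankS HF.
rewrite -kermx_eq0; apply/rowV0P => v /sub_kermxP Hv.
apply/rowP => i0; rewrite mxE; apply/eqP; apply: contraT => Hi0.
set P := [seq i <- enum 'I_s | v 0 i != 0].
have Pne : P != [::].
  apply/eqP => HP; have : i0 \in P by rewrite mem_filter Hi0 mem_enum.
  by rewrite HP.
have [i iP Hmax] := @ex_minimal _ (fun a b => lt (mon_of [set Z b]) (mon_of [set Z a])) P
  (fun a => Hirr _) (fun a b c H1 H2 => Htr _ _ _ H2 H1) Pne.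
have vi : v 0 i != 0 by move: iP; rewrite mem_filter => /andP [].
have := congr1 (fun M : 'M['F_2]_(1, n) => M 0 (Z i)) Hv; rewrite /= !mxE (bigD1 i) //= big1 => [|j ji].
  rewrite !mxE ffunE (_ : has _ Zs = true); last by apply/hasP; exists (Z i); rewrite ?set11.
  by rewrite (F2_neq0 vi) (F2_neq0 (HLT i).1) mulr1 addr0 => /eqP; rewrite oner_eq0.
rewrite !mxE ffunE; case: ifP => _; last by rewrite mulr0.
case: (eqVneq (v 0 j) 0) => [->|vj]; first by rewrite mul0r.
apply/eqP; rewrite mulf_eq0; apply/orP; right; apply: contraT => Hfj.
have jP : j \in P by rewrite mem_filter vj mem_enum.
have Hne : [set Z i] != [set Z j].
  by apply: contra ji => /eqP /set1_inj /Zinj ->.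
by have := (HLT j).2 _ Hfj Hne; have := Hmax j jP; move=> /negbTE ->.
Qed.

End Main.

Unset Implicit Arguments.

Theorem proposition6p4 (n r s : nat) (g : 'I_r -> bpoly n) (Z : 'I_s -> 'I_n) :
  injective Z -> (0 < s)%N ->
  ~ in_ideal g (bone n) ->
  let G := [seq g j | j <- enum 'I_r] in
  let Z' := [seq Z i | i <- enum 'I_s] in
  ((exists W, CHECK G Z' = Some W) <->
   (exists f : 'I_s -> bpoly n, (forall i, in_span g (f i)) /\ Z_separating g Z f))
  /\
  (forall W, CHECK G Z' = Some W ->
   forall lt : rel (mon n), term_ordering lt -> compatible_with W lt ->
   exists f' : 'I_s -> bpoly n,
     (forall i, in_span g (f' i)) /\ (forall i, is_LT lt (f' i) [set Z i])).
Proof.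
move=> Zinj s0 _ G Z'.
have HZ'i : forall i, Z i \in Z' by move=> i; apply: map_f; rewrite mem_enum.
have Hgood : good G Z' [seq restrictZ Z' g | g <- G].
  split; last by move=> f Hf; apply: inspan_map.
  by move=> q /mapP [x xG ->]; exists x => //; apply: ispE.
have Hdeg : forall f t, inspan G f -> f t != 0 -> (#|t| <= \max_(g <- G) poly_deg g)%N.
  by move=> f t; apply: deg_bound.
have HCHECK : forall W, CHECK G Z' = Some W ->
  check_loop (size Z') Z' [seq restrictZ Z' g | g <- G] [ffun => 0%N]
    (\max_(g <- G) poly_deg g)%N 1 = Some W.
  by move=> W; rewrite /CHECK; case: ifP.
have partb : forall W, CHECK G Z' = Some W -> forall lt, term_ordering lt ->
  compatible_with W lt -> exists f' : 'I_s -> bpoly n,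
  (forall i, in_span g (f' i)) /\ (forall i, is_LT lt (f' i) [set Z i]).
  move=> W /HCHECK HC lt Hto Hcomp.
  have Hw : forall i, i \notin Z' ->
      ((\max_(g <- G) poly_deg g) * ([ffun => 0%N] : {ffun 'I_n -> nat}) i < 1)%N.
    by move=> i _; rewrite ffunE muln0.
  have [_ HL2] := loop_sound Hdeg Hgood (isT : (0 < 1)%N) Hw HC.
  have : forall i, exists f, in_span g f /\ is_LT lt f [set Z i].
    move=> i; have [f [Hf Hfk Hlt]] := HL2 _ (HZ'i i).
    exists f; split; first exact: inspan_in_span.
    split => // u fu uk; apply: Hcomp.
    by rewrite [X in (_ < X)%N]wdeg_mon big_set1; apply: Hlt.
  case/fin_all_exists => f' Hf'; exists f'; split => i; [exact: (Hf' i).1 | exact: (Hf' i).2].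
split; last exact: partb.
split.
- move=> [W HW]; have [Hto Hcomp] := wlt_ordering W.
  have [f' [H1 H2]] := partb W HW _ Hto Hcomp.
  exists f'; split => //; split; first by move=> i; apply: in_span_ideal.
  by exists (wlt W).
- move=> [f [Hf [_ [lt [Hto HLT]]]]].
  have Hfi : forall i, inspan G (f i) := fun i => in_span_inspan (Hf i).
  have Hsz : size Z' = s by rewrite size_map size_enum_ord.
  have Hrank := rank_bound Zinj Hto HZ'i Hfi HLT.
  rewrite /CHECK ltnNge Hsz Hrank /=.
  have HZ : forall k, k \in Z' -> exists2 f0, inspan G f0 & is_LT lt f0 [set k].
    by move=> k /mapP [i _ ->]; exists (f i); [exact: Hfi | exact: HLT].
  have Hne : Z' != [::].
    by apply/eqP => HZ0; move: Hsz; rewrite HZ0 /= => Hs; lia.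
  apply: (@loop_complete n G _ lt Z' Hto HZ s Z' _ _ 1%N Hgood _ Hne); first by [].
  by rewrite Hsz.
Qed.
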